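(* Let $m\ge 2$, let $\alpha_1,\dots,\alpha_{m-1}\in\mathbb{C}$, and let $A$ be the $m\times m$ matrix whose rows are indexed by $k=1,\dots,m$ and columns by $l=0,\dots,m-1$, with entries $$A_{k,l}=\sum_{j=0}^{m-1-l}\alpha_k^{\,j+l}F(-m+j)\quad (1\le k\le m-1),\qquad A_{m,l}=\sum_{j=l+1}^{m}(j-l)f(-j).$$ Write $V=\prod_{1\le i<j\le m-1}(\alpha_j-\alpha_i)$ and $e_k=\sum_{1\le j_1<\dots<j_k\le m-1}\alpha_{j_1}\cdots\alpha_{j_k}$ (with $e_0=1$). Then $$\det A=(-1)^{m-1}f(-m)^m\prod_{j=1}^{m-1}(\alpha_j-1)\,V.$$ Moreover, denoting by $M_{m,l+1}$ ($l=0,\dots,m-1$) the minor of $A$ obtained by deleting the last row and the column indexed by $l$, we have $M_{m,1}=f(-m)^{m-1}\,e_{m-1}\,V$ and, for $k=1,\dots,m-1$, $$M_{m,k+1}=f(-m)^{m-1}\,e_{m-1-k}\,V+\sum_{i=1}^{k}(-1)^{k-i}\frac{F(-m+k+1-i)}{f(-m)}M_{m,i}$$ (the latter formulas under the assumption $f(-m)\neq 0$).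
   Context: $X$ and $c\theta$ ($c>0$) are independent, non-negative, integer-valued random variables with $\mathbb{P}(c\theta\le m)=1$. For $j\in\mathbb{Z}$: $f(j)=\mathbb{P}(X-c\theta=j)$ and $F(j)=\mathbb{P}(X-c\theta\le j)$ (so $F(-m)=f(-m)$). *)

(* Defs.v *)
From HB Require Import structures.
From mathcomp Require Import all_boot all_order all_algebra.
From mathcomp Require Import all_classical all_reals all_analysis.
From mathcomp Require Export complex.
Set Implicit Arguments. Unset Strict Implicit. Unset Printing Implicit Defensive.
Import Order.TTheory GRing.Theory Num.Theory.
Local Open Scope classical_set_scope.
Local Open Scope ring_scope.

Definition indep_nat (R : realType) (d : measure_display) (T : measurableType d)
  (P : probability T R) (X Y : T -> nat) : Prop :=
  forall a b : nat,
    P ([set t | X t = a] `&` [set t | Y t = b]) =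
    (P [set t | X t = a] * P [set t | Y t = b])%E.

Definition pmf_diff (R : realType) (d : measure_display) (T : measurableType d)
  (P : probability T R) (X Y : T -> nat) (j : int) : R :=
  fine (P [set t | (X t)%:Z - (Y t)%:Z = j]).

Definition cdf_diff (R : realType) (d : measure_display) (T : measurableType d)
  (P : probability T R) (X Y : T -> nat) (j : int) : R :=
  fine (P [set t | (X t)%:Z - (Y t)%:Z <= j]).

(* The m x m matrix A: row index i : 'I_m stands for k = i+1 (k = 1..m),
   column index l : 'I_m stands for l = 0..m-1.  alpha k is alpha_k (k = 1..m-1). *)
Definition matA (C : nzRingType) (m : nat) (alpha : nat -> C) (f F : int -> C)
  : 'M[C]_m :=
  \matrix_(i < m, l < m)
    if (i.+1 <= m.-1)%N then
      \sum_(j < m - l) alpha i.+1 ^+ (j + l) * F (- (m%:Z) + j%:Z)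
    else
      \sum_(l.+1 <= j < m.+1) (j - l)%:R * f (- (j%:Z)).

Definition vandV (C : nzRingType) (m : nat) (alpha : nat -> C) : C :=
  \prod_(1 <= i < m) \prod_(i.+1 <= j < m) (alpha j - alpha i).

Definition esymA (C : comNzRingType) (m : nat) (alpha : nat -> C) (k : nat) : C :=
  \sum_(S : {set 'I_m.-1} | #|S| == k) \prod_(j in S) alpha (val j).+1.

(* The minor of A obtained by deleting the last row and the column indexed
   by l (l = 0..m-1; this is the paper's M_{m,l+1}).  Column j of the minor
   is column bump l j of A (i.e. j if j < l, j+1 otherwise). *)
Definition skip_col (m : nat) (l : nat) (j : 'I_m.-1) : 'I_m :=
  insubd (widen_ord (leq_pred m) j) (if (val j < l)%N then val j else (val j).+1).

Definition last_minor (C : comNzRingType) (m : nat) (A : 'M[C]_m) (l : nat) : C :=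
  \det (\matrix_(i < m.-1, j < m.-1) A (widen_ord (leq_pred m) i) (@skip_col m l j)).

(* Main.v *)
Require Import Defs.
From HB Require Import structures.
From mathcomp Require Import all_boot all_order all_algebra.
From mathcomp Require Import all_classical all_reals all_analysis.
From mathcomp Require Import complex.
From mathcomp Require Import zify ring.
Import Order.TTheory GRing.Theory Num.Theory.
Local Open Scope classical_set_scope.
Local Open Scope ring_scope.

Lemma sum_shift (C : nmodType) m l (G : nat -> C) : (l <= m)%N ->
  \sum_(p < m) (if (l <= p)%N then G p else 0) = \sum_(j < m - l) G (j + l)%N.
Proof.
move=> lm; transitivity (\sum_(l <= p < m) G p).
  by rewrite big_geq_mkord [RHS]big_mkcond.
have H := big_addn 0 m l predT G; rewrite add0n in H.
by rewrite H big_mkord.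
Qed.

Lemma vandV_E (R : comNzRingType) n (c : nat -> R) :
  vandV n.+1 c = \prod_(i < n) \prod_(j < n | (i < j)%N) (c j.+1 - c i.+1).
Proof.
rewrite /vandV.
have H := big_addn 0 n.+1 1 predT (fun i => \prod_(i.+1 <= j < n.+1) (c j - c i)).
rewrite add0n in H; rewrite H subn1 /= big_mkord; apply: eq_bigr => i _.
have H2 := big_addn i.+1 n.+1 1 predT (fun j => c j - c i.+1).
rewrite addn1 in H2; rewrite addn1 H2 subn1 /= big_geq_mkord.
by apply: congr_big => // j; rewrite addn1.
Qed.

Lemma vand_split (R : comNzRingType) n (c : nat -> R) (x : R) (b : 'I_n.+1 -> R) :
  b =1 (fun i : 'I_n.+1 => if (i < n)%N then c i.+1 else x) ->
  \prod_(i < n.+1) \prod_(j < n.+1 | (i < j)%N) (b j - b i)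
  = vandV n.+1 c * \prod_(i < n) (x - c i.+1).
Proof.
move=> hb.
rewrite big_ord_recr /= [X in _ * X]big1 ?mulr1; last first.
  by move=> j; rewrite ltnNge -ltnS ltn_ord.
rewrite vandV_E.
rewrite -big_split /=; apply: eq_bigr => i _.
rewrite big_mkcond big_ord_recr /= [in RHS]big_mkcond !hb /= (ltn_ord i) ltnn.
congr (_ * _); apply: eq_bigr => j _; by rewrite hb /= ltn_ord.
Qed.




Section Alg.
Variables (C : fieldType) (n : nat) (alpha : nat -> C) (f F : int -> C).
Hypothesis hF0 : F (- (n.+1)%:Z) = f (- (n.+1)%:Z).
Hypothesis hFS : forall j : nat, (j < n)%N ->
  F (- (n.+1)%:Z + j.+1%:Z) = F (- (n.+1)%:Z + j%:Z) + f (- (n.+1)%:Z + j.+1%:Z).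

Definition S (j : nat) := F (- (n.+1)%:Z + j%:Z).
Definition a (i : nat) := f (- (n.+1)%:Z + i%:Z).

Lemma S_sum j : (j <= n)%N -> S j = \sum_(i < j.+1) a i.
Proof.
elim: j => [_|j IH jn].
  by rewrite big_ord1 /S /a addr0 hF0.
by rewrite big_ord_recr /= -IH ?(ltnW jn) // /S /a hFS.
Qed.

Lemma sumS N : (N <= n.+1)%N ->
  \sum_(j < N) S j = \sum_(i < N) (N - i)%:R * a i.
Proof.
elim: N => [|N IH] Nn; first by rewrite !big_ord0.
rewrite big_ord_recr /= IH ?(ltnW Nn) // S_sum // [RHS]big_ord_recr /= subSnn mul1r.
rewrite big_ord_recr /= addrA; congr (_ + _).
rewrite -big_split /=; apply: eq_bigr => i _.
by rewrite subSn 1?ltnW // -addn1 natrD mulrDl mul1r.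
Qed.

Lemma rowm_id (l : nat) : (l < n.+1)%N ->
  \sum_(l.+1 <= j < n.+2) (j - l)%:R * f (- (j%:Z))
  = \sum_(j < n.+1 - l) S j.
Proof.
move=> ln; rewrite [RHS](@sumS (n.+1 - l) (leq_subr _ _)) big_rev_mkord subSS.
apply: eq_bigr => k _.
have kn : (k < n.+1 - l)%N := ltn_ord k.
rewrite /a subSS subnAC; congr (_ * f _); lia.
Qed.

Definition beta (i : 'I_n.+1) : C := if (i < n)%N then alpha i.+1 else 1.
Definition Wm : 'M[C]_n.+1 := \matrix_(i, p) beta i ^+ p.
Definition Tm : 'M[C]_n.+1 := \matrix_(p, l) if (l <= p)%N then S (p - l) else 0.

Lemma A_factor : matA n.+1 alpha f F = Wm *m Tm.
Proof.
apply/matrixP => i l; rewrite !mxE.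
rewrite (eq_bigr (fun p : 'I_n.+1 => if (l <= p)%N then beta i ^+ p * S (p - l) else 0));
  last by move=> p _; rewrite !mxE; case: ifP; rewrite ?mulr0.
rewrite (@sum_shift _ n.+1 l (fun p => beta i ^+ p * S (p - l))); last by rewrite ltnW.
rewrite /beta /=; case: ifP => iN.
  by apply: eq_bigr => j _; rewrite addnK.
rewrite rowm_id //; apply: eq_bigr => j _; by rewrite expr1n mul1r addnK.
Qed.


Lemma S0 : S 0 = f (- (n.+1)%:Z).
Proof. by rewrite /S addr0 hF0. Qed.

Lemma det_T : \det Tm = f (- (n.+1)%:Z) ^+ n.+1.
Proof.
rewrite det_trig; last by apply/is_trig_mxP => i j ij; rewrite mxE leqNgt ij.
under eq_bigr do rewrite mxE leqnn subnn S0.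
by rewrite prodr_const card_ord.
Qed.

Lemma det_W : \det Wm = vandV n.+1 alpha * \prod_(i < n) (1 - alpha i.+1).
Proof.
have -> : Wm = (Vandermonde n.+1 (\row_i beta i))^T.
  by apply/matrixP => i j; rewrite !mxE.
rewrite det_tr det_Vandermonde.
under eq_bigr do under eq_bigr do rewrite !mxE.
by apply: (@vand_split C n alpha 1 beta).
Qed.

Lemma sign_prod : \prod_(i < n) (1 - alpha i.+1)
   = (-1) ^+ n * \prod_(1 <= j < n.+1) (alpha j - 1).
Proof.
rewrite big_add1 /= big_mkord.
under eq_bigr do rewrite -opprB -mulN1r.
by rewrite big_split /= prodr_const card_ord.
Qed.

Lemma part1 : \det (matA n.+1 alpha f F) = (-1) ^+ n * f (- (n.+1)%:Z) ^+ n.+1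
                * \prod_(1 <= j < n.+1) (alpha j - 1) * vandV n.+1 alpha.
Proof.
rewrite A_factor det_mulmx det_W det_T sign_prod.
ring.
Qed.

Lemma skip_colE (l : nat) (j : 'I_n) :
  nat_of_ord (@skip_col n.+1 l j) = if (j < l)%N then nat_of_ord j else j.+1.
Proof.
rewrite /skip_col val_insubd; have := ltn_ord j.
case: (j < l)%N; case: ifP => // h jn.
by change (\val j < n)%N with (j < n)%N in h; rewrite ltnS jn in h.
Qed.


Definition W2 : 'M[C]_n := \matrix_(i, q) alpha i.+1 ^+ q.+1.
Definition T2 : 'M[C]_n := \matrix_(q, j) if (j <= q)%N then S (q - j) else 0.

Lemma minor0_factor : (\matrix_(i < n, j < n) (matA n.+1 alpha f F)
   (widen_ord (leq_pred n.+1) i) (@skip_col n.+1 0 j)) = W2 *m T2.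
Proof.
rewrite A_factor; apply/matrixP => i j; rewrite !mxE big_ord_recl /= !mxE skip_colE ltn0.
rewrite mulr0 add0r; apply: eq_bigr => q _; rewrite !mxE /beta /= ltn_ord.
by rewrite skip_colE ltn0 /bump leq0n add1n ltnS subSS.
Qed.

Lemma det_W2 : \det W2 = (\prod_(i < n) alpha i.+1) * vandV n.+1 alpha.
Proof.
have -> : W2 = diag_mx (\row_i alpha i.+1) *m (Vandermonde n (\row_i alpha i.+1))^T.
  by rewrite mul_diag_mx; apply/matrixP => i j; rewrite !mxE exprS.
rewrite det_mulmx det_diag det_tr det_Vandermonde vandV_E.
under eq_bigr do rewrite mxE.
congr (_ * _); apply: eq_bigr => i _; apply: eq_bigr => j _; by rewrite !mxE.
Qed.

Lemma det_T2 : \det T2 = f (- (n.+1)%:Z) ^+ n.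
Proof.
rewrite det_trig; last by apply/is_trig_mxP => i j ij; rewrite mxE leqNgt ij.
under eq_bigr do rewrite mxE leqnn subnn S0.
by rewrite prodr_const card_ord.
Qed.

Lemma esym_top : esymA n.+1 alpha n = \prod_(i < n) alpha i.+1.
Proof.
rewrite /esymA (eq_bigl (fun S => S == [set: 'I_n]%SET)); last first.
  move=> X /=; rewrite eqEcard finset.subsetT cardsT card_ord /= eqn_leq.
  by have := max_card X; rewrite card_ord => ->.
rewrite big_pred1_eq; apply: eq_bigl => i; exact: finset.in_setT.
Qed.

Lemma part2 : last_minor (matA n.+1 alpha f F) 0
   = f (- (n.+1)%:Z) ^+ n * esymA n.+1 alpha n * vandV n.+1 alpha.
Proof.
rewrite /last_minor minor0_factor det_mulmx det_W2 det_T2 esym_top; ring.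
Qed.

Definition Bm (r : 'I_n.+1 -> C) : 'M[C]_n.+1 :=
  \matrix_(i, j) if (i < n)%N then matA n.+1 alpha f F i j else r j.

Lemma det_Bm r : \det (Bm r) = \sum_(j < n.+1) r j *
   ((-1) ^+ (n + j) * last_minor (matA n.+1 alpha f F) j).
Proof.
rewrite /last_minor /Bm; move: (matA n.+1 alpha f F) => A.
rewrite (expand_det_row _ ord_max); apply: eq_bigr => j _.
rewrite mxE /= ltnn; congr (_ * _); rewrite /cofactor /=; congr (_ * \det _).
apply/matrixP => i k; rewrite !mxE.
have e1 : lift ord_max i = widen_ord (leq_pred n.+1) i.
  apply: val_inj; exact: lift_max.
have e2 : lift j k = @skip_col n.+1 j k.
  apply: val_inj; rewrite /= skip_colE /bump.
  change (((j <= k)%N + k)%N = (if (k < j)%N then (k:nat) else (k:nat).+1)).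
  by case: (ltnP k j).
by rewrite e1 e2 /= ltn_ord.
Qed.

Definition BW (p : 'I_n.+1) : 'M[C]_n.+1 :=
  \matrix_(i, q) if (i < n)%N then Wm i q else (q == p)%:R.

Lemma Bm_factor p : Bm (Tm p) = BW p *m Tm.
Proof.
apply/matrixP => i l; rewrite /Bm A_factor !mxE; case: ifP => hi.
  by apply: eq_bigr => q _; rewrite !mxE hi.
rewrite (bigD1 p) //= !mxE hi eqxx mul1r big1 ?addr0 // => q qp.
by rewrite !mxE hi (negbTE qp) mul0r.
Qed.

Lemma det_BW p : \det (BW p) = (-1) ^+ (n + p) * \det (row' ord_max (col' p Wm)).
Proof.
rewrite (expand_det_row _ ord_max) (bigD1 p) //= big1 ?addr0; last first.
  by move=> q qp; rewrite mxE ltnn (negbTE qp) mul0r.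
rewrite mxE ltnn eqxx mul1r /cofactor; congr (_ * \det _); apply/matrixP => i k.
by rewrite !mxE lift_max ltn_ord.
Qed.

Lemma DW_E (p : 'I_n.+1) :
  \det (row' ord_max (col' p Wm)) = vandV n.+1 alpha * esymA n.+1 alpha (n - p).
Proof.
pose PW : 'M[{poly C}]_n.+1 := \matrix_(i, q) if (i < n)%N then (Wm i q)%:P else 'X^q.
have h1 : \det PW = \sum_(q < n.+1)
    ((-1) ^+ (n + q) * \det (row' ord_max (col' q Wm)))%:P * 'X^q.
  rewrite (expand_det_row _ ord_max); apply: eq_bigr => q _.
  rewrite mxE ltnn mulrC /cofactor rmorphM rmorph_sign /=; congr (_ * _).
  rewrite -det_map_mx; congr (_ * \det _); apply/matrixP => i k.
  by rewrite !mxE lift_max ltn_ord.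
have h2 : \det PW = (vandV n.+1 alpha)%:P * \prod_(i < n) ('X - (alpha i.+1)%:P).
  have -> : PW = (Vandermonde n.+1
      (\row_i (if (i < n)%N then (alpha i.+1)%:P else 'X) : 'rV[{poly C}]_n.+1))^T.
    apply/matrixP => i q; rewrite !mxE /beta; case: ifP => // h; by rewrite h rmorphXn.
  rewrite det_tr det_Vandermonde.
  under eq_bigr do under eq_bigr do rewrite !mxE.
  rewrite (@vand_split _ n (fun j => (alpha j)%:P) 'X) //.
  congr (_ * _); rewrite !vandV_E rmorph_prod; apply: eq_bigr => i _.
  by rewrite rmorph_prod; apply: eq_bigr => j _; rewrite rmorphB.
have h3 := congr1 (fun P : {poly C} => P`_p) (etrans (esym h1) h2).
move: h3 => /=.
rewrite coef_sum (bigD1 p) //= coefCM coefXn eqxx mulr1 big1 ?addr0; last first.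
  move=> q qp; rewrite coefCM coefXn.
  have -> : (nat_of_ord p == nat_of_ord q) = false.
    by apply/negbTE; rewrite eq_sym; exact: qp.
  by rewrite mulr0.
have -> : \prod_(i < n) ('X - (alpha i.+1)%:P)
    = \prod_(x <- mkseq (fun i => alpha i.+1) n) ('X - x%:P).
  rewrite /mkseq big_map; symmetry.
  have H := big_mkord (R:={poly C}) (idx:=1) (op:=*%R) (n:=n) xpredT (fun i => (@polyX C) - (alpha i.+1)%:P).
  rewrite /index_iota subn0 in H; exact: H.
rewrite coefCM coef_prod_XsubC; last by rewrite size_mkseq -ltnS.
rewrite size_mkseq.
have eE : \sum_(I in {set 'I_n} | #|I| == (n - p)%N)
      \prod_(i in I) (mkseq (fun i0 : nat => alpha i0.+1) n)`_i = esymA n.+1 alpha (n - p).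
  rewrite /esymA; apply: eq_bigr => I _; apply: eq_bigr => i _.
  exact: nth_mkseq.
have sg : (-1) ^+ (n + p) = (-1) ^+ (n - p) :> C.
  have -> : (n + p = (n - p) + 2 * p)%N by have := ltn_ord p; lia.
  by rewrite exprD exprM expr2 mulrNN mulr1 expr1n mulr1.
rewrite eE sg => h.
apply: (can_inj (signrMK (n - p))) => /=.
by rewrite h mulrCA.
Qed.

Lemma sum_trunc (N k : nat) (g : nat -> C) : (k < N)%N ->
  \sum_(l < N) (if (l <= k)%N then g l else 0) = \sum_(0 <= l < k.+1) g l.
Proof.
move=> kN; rewrite (@big_nat_widen _ _ _ 0 k.+1 N xpredT g kN) big_mkord [RHS]big_mkcond.
by apply: eq_bigr => i _; rewrite ltnS.
Qed.

Lemma key (p : 'I_n.+1) :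
  \sum_(0 <= l < p.+1) S (p - l) * ((-1) ^+ (n + l) * last_minor (matA n.+1 alpha f F) l)
  = (-1) ^+ (n + p) * (vandV n.+1 alpha * esymA n.+1 alpha (n - p)) * f (- (n.+1)%:Z) ^+ n.+1.
Proof.
have := det_Bm (Tm p); rewrite Bm_factor det_mulmx det_BW DW_E det_T => ->.
rewrite -(@sum_trunc n.+1 p (fun l => S (p - l) * ((-1) ^+ (n + l) * last_minor (matA n.+1 alpha f F) l))) //.
by apply: eq_bigr => j _; rewrite mxE; case: ifP => _; rewrite ?mul0r.
Qed.

Lemma part3 : f (- (n.+1)%:Z) != 0 -> forall k : nat, (1 <= k <= n)%N ->
  last_minor (matA n.+1 alpha f F) k
  = f (- (n.+1)%:Z) ^+ n * esymA n.+1 alpha (n - k) * vandV n.+1 alpha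
   + \sum_(0 <= i < k) (-1) ^+ (k - i.+1)
        * (F (- (n.+1)%:Z + k%:Z - i%:Z) / f (- (n.+1)%:Z)) * last_minor (matA n.+1 alpha f F) i.
Proof.
move=> hf k /andP[k1 kn].
have kN : (k < n.+1)%N by [].
have E := key (Ordinal kN); rewrite /= big_nat_recr //= subnn S0 in E.
set M := last_minor (matA n.+1 alpha f F) in E *.
set s := (-1) ^+ (n + k) in E *.
have hsum : \sum_(0 <= i < k) (-1) ^+ (k - i.+1)
        * (F (- (n.+1)%:Z + k%:Z - i%:Z) / f (- (n.+1)%:Z)) * M i
   = - (s / f (- (n.+1)%:Z)) * \sum_(0 <= l < k) S (k - l) * ((-1) ^+ (n + l) * M l).
  rewrite mulr_sumr; apply: eq_big_nat => i /andP[_ ik].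
  have -> : F (- (n.+1)%:Z + k%:Z - i%:Z) = S (k - i) by rewrite /S; congr F; lia.
  have -> : (-1) ^+ (k - i.+1) = - (s * (-1) ^+ (n + i)) :> C.
    rewrite /s -exprD.
    have -> : (n + k + (n + i) = (k - i.+1) + 1 + 2 * (n + i))%N by lia.
    rewrite (exprD _ (k - i.+1 + 1)) exprM (exprD _ (k - i.+1) 1).
    by rewrite expr2 mulrNN mulr1 expr1n mulr1 expr1 mulrN1 opprK.
  ring.
rewrite hsum.
have hS : \sum_(0 <= l < k) S (k - l) * ((-1) ^+ (n + l) * M l)
   = s * (vandV n.+1 alpha * esymA n.+1 alpha (n - k)) * f (- (n.+1)%:Z) ^+ n.+1
     - f (- (n.+1)%:Z) * (s * M k) by rewrite -E addrK.
rewrite hS /s -signr_odd exprS; case: (odd _); rewrite ?expr0 ?expr1; field; exact: hf.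
Qed.
End Alg.
Section Prob.
Variables (R : realType) (d : measure_display) (T : measurableType d)
  (P : probability T R) (X Y : T -> nat).
Hypothesis hX : forall n : nat, measurable [set t | X t = n].
Hypothesis hY : forall n : nat, measurable [set t | Y t = n].

Lemma mQ (Q : nat -> nat -> Prop) : measurable [set t | Q (X t) (Y t)].
Proof.
have -> : [set t | Q (X t) (Y t)] = \bigcup_a \bigcup_b
    ([set t | X t = a] `&` [set t | Y t = b] `&` [set _ | Q a b]).
  apply/seteqP; split => t /=.
    by move=> h; exists (X t) => //; exists (Y t).
  by move=> [a _ [b _ [[/= -> ->] h]]].
apply: bigcupT_measurable => a; apply: bigcupT_measurable => b.
apply: measurableI; first exact: measurableI.
case: (pselect (Q a b)) => h.
  have -> : [set _ : T | Q a b] = [set: T] by apply/seteqP; split => t //= _.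
  exact: measurableT.
have -> : [set _ : T | Q a b] = set0 by apply/seteqP; split => t //=.
exact: measurable0.
Qed.

Lemma fineU (A B : set T) : measurable A -> measurable B -> A `&` B = set0 ->
  fine (P (A `|` B)) = fine (P A) + fine (P B).
Proof.
move=> mA mB AB; rewrite measureU // fineD //; exact: fin_num_measure.
Qed.

Lemma cdf_step (j : int) : cdf_diff P X Y j = pmf_diff P X Y j + cdf_diff P X Y (j - 1).
Proof.
have mE : measurable [set t | (X t)%:Z - (Y t)%:Z = j] := mQ (fun x y => x%:Z - y%:Z = j).
have mL : measurable [set t | (X t)%:Z - (Y t)%:Z <= j - 1] :=
  mQ (fun x y => x%:Z - y%:Z <= j - 1).
have dj : [set t | (X t)%:Z - (Y t)%:Z = j] `&` [set t | (X t)%:Z - (Y t)%:Z <= j - 1] = set0.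
  by apply/seteqP; split => t //= [h1 h2]; lia.
rewrite /cdf_diff /pmf_diff -(fineU _ _ mE mL dj); congr (fine (P _)).
apply/seteqP; split => t /=.
  move=> h; have [e|ne] := eqVneq ((X t)%:Z - (Y t)%:Z) j; [left | right] => //; lia.
by case => h; lia.
Qed.

Lemma cdf_base (m : nat) : P [set t | (Y t <= m)%N] = 1%E ->
  cdf_diff P X Y (- m%:Z) = pmf_diff P X Y (- m%:Z).
Proof.
move=> hYm; rewrite cdf_step.
suff -> : cdf_diff P X Y (- m%:Z - 1) = 0 by rewrite addr0.
rewrite /cdf_diff (@subset_measure0 _ _ _ P _ (~` [set t | (Y t <= m)%N])) //.
- exact: (mQ (fun x y => x%:Z - y%:Z <= - m%:Z - 1)).
- apply: measurableC; exact: (mQ (fun x y => (y <= m)%N)).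
- by move=> t /= h hy; lia.
- have hm : measurable [set t | (Y t <= m)%N] := mQ (fun x y => (y <= m)%N).
  have := probability_setC P hm; rewrite hYm subee // => h; exact: h.
Qed.
End Prob.

Theorem lemma3p2 (R : realType) (d : measure_display) (T : measurableType d)
  (P : probability T R) (X Y : T -> nat) (m : nat) (alpha : nat -> R[i]) :
  (forall n : nat, measurable [set t | X t = n]) ->
  (forall n : nat, measurable [set t | Y t = n]) ->
  indep_nat P X Y ->
  P [set t | (Y t <= m)%N] = 1%E ->
  (2 <= m)%N ->
  let f : int -> R[i] := fun j => real_complex R (pmf_diff P X Y j) in
  let F : int -> R[i] := fun j => real_complex R (cdf_diff P X Y j) in
  let A := matA m alpha f F in
  let V := vandV m alpha in
  let e := esymA m alpha in
  let M := last_minor A in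
  [/\ \det A = (-1) ^+ m.-1 * f (- (m%:Z)) ^+ m
                * \prod_(1 <= j < m) (alpha j - 1) * V,
      M 0%N = f (- (m%:Z)) ^+ m.-1 * e m.-1 * V
    & f (- (m%:Z)) != 0 ->
      forall k : nat, (1 <= k <= m.-1)%N ->
        M k = f (- (m%:Z)) ^+ m.-1 * e (m.-1 - k)%N * V
              + \sum_(0 <= i < k)
                  (-1) ^+ (k - i.+1)
                  * (F (- (m%:Z) + k%:Z - i%:Z) / f (- (m%:Z))) * M i].
Proof.
move=> hX hY hind hYm hm.
case: m hYm hm => [|n] hYm hm //.
move=> f F A V e M.
have hF0 : F (- (n.+1)%:Z) = f (- (n.+1)%:Z).
  by rewrite /F /f (@cdf_base R d T P X Y hX hY n.+1 hYm).
have hFS : forall j : nat, (j < n)%N ->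
    F (- (n.+1)%:Z + j.+1%:Z) = F (- (n.+1)%:Z + j%:Z) + f (- (n.+1)%:Z + j.+1%:Z).
  move=> j _; rewrite /F /f (@cdf_step R d T P X Y hX hY) raddfD /= addrC.
  congr (_ + _); congr (real_complex _ (cdf_diff _ _ _ _)); lia.
rewrite /A /V /e /M; split.
- exact: (@part1 _ n alpha f F hF0 hFS).
- exact: (@part2 _ n alpha f F hF0).
- exact: (@part3 _ n alpha f F hF0 hFS).
Qed.
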